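(* Let $p,q$ be two distinct prime numbers and $l$ a positive odd integer. Then $\dfrac{-1}{p}\in\mathbb{Q}\text{-}\mathcal{KS}(q^{l})$ if and only if $\dfrac{-1}{q}\in\mathbb{Q}\text{-}\mathcal{KS}(p^{l})$.
   Context: Every nonzero rational $\alpha$ is written $\alpha=\alpha_1/\alpha_2$ with $\alpha_1\in\mathbb{Z}$, $\alpha_2$ a positive integer and $\gcd(\alpha_1,\alpha_2)=1$. For an integer $N\ge 2$ and a nonzero rational $\alpha=\alpha_1/\alpha_2$, $N$ is called an $\alpha$-Korselt number if $N\neq\alpha$ and $\alpha_2r-\alpha_1$ divides $\alpha_2N-\alpha_1$ (in $\mathbb{Z}$) for every prime divisor $r$ of $N$. $\mathbb{Q}\text{-}\mathcal{KS}(N)$ is the set of all $\beta\in\mathbb{Q}\setminus\{0,N\}$ such that $N$ is a $\beta$-Korselt number. *)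

(* Defs.v *)
From mathcomp Require Import all_boot all_order all_algebra.
Set Implicit Arguments. Unset Strict Implicit. Unset Printing Implicit Defensive.
Import Order.TTheory GRing.Theory Num.Theory.
Local Open Scope ring_scope.

Definition korselt (alpha : rat) (N : nat) : Prop :=
  (2 <= N)%N /\ alpha != 0 /\ alpha != (N%:R : rat) /\
  forall r : nat, prime r -> (r %| N)%N ->
    (denq alpha * r%:Z - numq alpha %| denq alpha * N%:Z - numq alpha)%Z.

Definition QKS (N : nat) (beta : rat) : Prop :=
  beta != 0 /\ beta != (N%:R : rat) /\ korselt beta N.

(* Main.v *)
Require Import Defs.
From mathcomp Require Import all_boot all_order all_algebra.
From mathcomp Require Import ring lra zify.
Import Order.TTheory GRing.Theory Num.Theory.
Local Open Scope ring_scope.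

Lemma odd_pow_dvd (x : int) k : (x + 1 %| x ^+ k.*2.+1 + 1)%Z.
Proof.
elim: k => [|k IH]; first by rewrite expr1.
have -> : x ^+ k.+1.*2.+1 + 1 = x^+2 * (x ^+ k.*2.+1 + 1) - (x - 1) * (x + 1).
  rewrite doubleS !exprS; set y := x ^+ k.*2; ring.
by rewrite rpredB ?dvdz_mull ?dvdz_mulr.
Qed.

Lemma key (P Q : int) k : (P*Q+1 %| P*Q^+k.*2.+1+1)%Z -> (P*Q+1 %| Q*P^+k.*2.+1+1)%Z.
Proof.
move=> H.
have h1 := odd_pow_dvd (P*Q) k.
have h2 : (P*Q+1 %| P^+k.*2 - 1)%Z.
  have e : P^+k.*2 - 1 = P^+k.*2 * (P*Q^+k.*2.+1+1) - ((P*Q)^+k.*2.+1 + 1).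
    rewrite exprMn !exprS; set y := P ^+ k.*2; set z := Q ^+ k.*2; ring.
  by rewrite e rpredB ?dvdz_mull.
have -> : Q*P^+k.*2.+1+1 = (P*Q) * (P^+k.*2 - 1) + (P*Q+1).
  rewrite exprS; set y := P ^+ k.*2; ring.
by rewrite rpredD ?dvdz_mull.
Qed.

Lemma nd (p : nat) : prime p -> numq (- 1 / p%:R : rat) = -1 /\ denq (- 1 / p%:R : rat) = p%:Z.
Proof.
move=> pp.
have p0 : (0 < p)%N := prime_gt0 pp.
have e : (- 1 / p%:R : rat) = (-1 : int)%:~R / (p%:Z)%:~R by [].
have c : coprime `|(-1 : int)| `|p%:Z| by rewrite /coprime gcd1n.
rewrite e coprimeq_num // coprimeq_den //.
by move: p0 {e c pp}; case: p.
Qed.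


Lemma PX (q l : nat) : ((q^l)%N : int) = (q:int)^+l.
Proof. by rewrite -[LHS]natz natrX natz. Qed.

Lemma bridge (p q l : nat) : prime p -> prime q -> (0 < l)%N ->
  QKS (q ^ l)%N (- 1 / p%:R) <-> (p%:Z * q%:Z + 1 %| p%:Z * (q%:Z) ^+ l + 1)%Z.
Proof.
move=> pp pq l0; have [hn hd] := nd p pp.
have q2 := prime_gt1 pq; have p2 := prime_gt1 pp.
have neg : (- 1 / p%:R : rat) < 0.
  by rewrite mulN1r oppr_lt0 invr_gt0 ltr0n prime_gt0.
have ne0 : (- 1 / p%:R : rat) != 0 by rewrite ltr0_neq0.
have neN : (- 1 / p%:R : rat) != (q ^ l)%N%:R.
  by apply/negP => /eqP e; move: neg; rewrite e ltNge ler0n.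
rewrite /QKS /korselt hn hd -PX.
split.
- move=> [_ [_ [_ [_ [_ H]]]]].
  have := H q pq; rewrite Euclid_dvdX // dvdnn l0 => /(_ isT).
  by rewrite opprK.
- move=> H; split; first by []. split; first by [].
  split.
    have : (q ^ 1 <= q ^ l)%N by rewrite leq_exp2l.
    by rewrite expn1; lia.
  split; first by []. split; first by [].
  move=> r pr; rewrite Euclid_dvdX // l0 andbT dvdn_prime2 // => /eqP ->.
  by rewrite opprK.
Qed.

Theorem proposition5p4 (p q l : nat) :
  prime p -> prime q -> p <> q -> odd l -> (0 < l)%N ->
  (QKS (q ^ l)%N (- 1 / p%:R) <-> QKS (p ^ l)%N (- 1 / q%:R)).
Proof.
move=> pp pq _ ol l0.
rewrite (bridge p q l pp pq l0) (bridge q p l pq pp l0).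
have -> : l = (l./2).*2.+1 by rewrite -[LHS]odd_double_half ol add1n.
split => /key.
  by rewrite [(p:int) * q]mulrC.
by rewrite [(q:int) * p]mulrC.
Qed.
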